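(* Let $\mathcal X$ be a subset of the nonzero elements of a field, let $g:\mathcal X\to\mathcal X$ be a bijection and $f:\mathcal X\times\mathcal X\to\mathcal X$ a function such that the map $S:\mathcal X^2\times\mathcal X^2\to\mathcal X^2\times\mathcal X^2$, $$S(x,X;y,Y)=(u,U;v,V)=\Big(g^{-1}\Big(\frac{g(x)}{f(v,V)}\Big),\;X\frac{f(y,Y)}{f(v,V)};\;g^{-1}\big(Xg(y)\big),\;XY\Big)$$ is well defined, and suppose that $f(u,U)f(v,V)=f(x,X)$ for all $(x,X;y,Y)$, where $(u,U;v,V)=S(x,X;y,Y)$. Then $S$ is a pentagon map.
   Context: Pentagon map: for a set $Y$ (here $Y=\mathcal X^2$) and $S:Y\times Y\to Y\times Y$, set $S_{12}=S\times\mathrm{id}_Y$, $S_{23}=\mathrm{id}_Y\times S$, $S_{13}(y_1,y_2,y_3)=(p,y_2,q)$ with $(p,q)=S(y_1,y_3)$; $S$ is a pentagon map if $S_{12}\circ S_{13}\circ S_{23}=S_{23}\circ S_{12}$ (rightmost applied first). *)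

(* Defs.v *)
From HB Require Import structures.
From mathcomp Require Import all_boot all_order all_algebra.
Set Implicit Arguments. Unset Strict Implicit. Unset Printing Implicit Defensive.
Import GRing.Theory.
Local Open Scope ring_scope.

(* Generic pentagon maps, on a type Y restricted to a domain predicate P
   (the "set" Y of the paper is {y : Y | P y}). *)
Section Pentagon.
Variable Y : Type.
Definition S12 (S : Y * Y -> Y * Y) (t : Y * Y * Y) : Y * Y * Y :=
  let: (y1, y2, y3) := t in let: (p, q) := S (y1, y2) in (p, q, y3).
Definition S23 (S : Y * Y -> Y * Y) (t : Y * Y * Y) : Y * Y * Y :=
  let: (y1, y2, y3) := t in let: (p, q) := S (y2, y3) in (y1, p, q).
Definition S13 (S : Y * Y -> Y * Y) (t : Y * Y * Y) : Y * Y * Y :=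
  let: (y1, y2, y3) := t in let: (p, q) := S (y1, y3) in (p, y2, q).
Definition pentagon_on (P : Y -> Prop) (S : Y * Y -> Y * Y) : Prop :=
  forall y1 y2 y3, P y1 -> P y2 -> P y3 ->
    S12 S (S13 S (S23 S (y1, y2, y3))) = S23 S (S12 S (y1, y2, y3)).
End Pentagon.

Definition Smap (K : fieldType) (g gi : K -> K) (f : K -> K -> K)
    (a : (K * K) * (K * K)) : (K * K) * (K * K) :=
  let: ((x, X), (y, Y)) := a in
  let v := gi (X * g y) in
  let V := X * Y in
  let u := gi (g x / f v V) in
  let U := X * f y Y / f v V in
  ((u, U), (v, V)).

Definition inXX (K : fieldType) (A : {pred K}) (p : K * K) : Prop :=
  p.1 \in A /\ p.2 \in A.

(* Main.v *)
Require Import Defs.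
From HB Require Import structures.
From mathcomp Require Import all_boot all_order all_algebra.
Import GRing.Theory.
From mathcomp Require Import ring.
Local Open Scope ring_scope.

Theorem mainTheorem7 (K : fieldType) (A : {pred K}) (g gi : K -> K)
    (f : K -> K -> K) :
  (* A is a subset of the nonzero elements *)
  0 \notin A ->
  (* g : A -> A is a bijection with inverse gi *)
  {in A, forall x, g x \in A} ->
  {in A, forall x, gi x \in A} ->
  {in A, cancel g gi} ->
  {in A, cancel gi g} ->
  (* f : A x A -> A *)
  {in A &, forall x y, f x y \in A} ->
  (* S is well defined: all arguments of g^{-1} and all components lie in A *)
  (forall x X y Y, x \in A -> X \in A -> y \in A -> Y \in A ->
     let v := gi (X * g y) in
     let V := X * Y in
     [/\ X * g y \in A, X * Y \in A,
         g x / f v V \in A & X * f y Y / f v V \in A]) ->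
  (* f(u,U) f(v,V) = f(x,X) *)
  (forall x X y Y, x \in A -> X \in A -> y \in A -> Y \in A ->
     let: ((u, U), (v, V)) := Smap g gi f ((x, X), (y, Y)) in
     f u U * f v V = f x X) ->
  pentagon_on (inXX A) (Smap g gi f).
Proof.
move=> h0 hg hgi gK giK hf wd hS [x X] [y Y] [z Z] [/= hx hX] [/= hy hY] [/= hz hZ].
rewrite /S12 /S13 /S23 /Smap /=.
have nz : forall t, t \in A -> t != 0 by move=> t ht; apply: contraNneq h0 => <-.
have [hYg hYZ hyb _] := wd y Y z Z hy hY hz hZ.
have hSy := hS y Y z Z hy hY hz hZ; rewrite /Smap /= in hSy.
have [hXg hXY _ _] := wd x X y Y hx hX hy hY.
set b := gi (Y * g z) in hyb hSy *.
have hb : b \in A by exact: hgi.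
have gb : g b = Y * g z by exact: giK.
set v := gi (X * g y) in hSy *.
have hv : v \in A by exact: hgi.
have gv : g v = X * g y by exact: giK.
have [hVg hVZ hvq hvP] := wd v (X * Y) z Z hv hXY hz hZ.
have hSv := hS v (X * Y) z Z hv hXY hz hZ; rewrite /Smap /= gv in hSv hvq hvP.
have [_ _ hxq _] := wd x X b (Y * Z) hx hX hb hYZ.
rewrite gb !mulrA in hxq.
rewrite !gb !gv !mulrA.
set q := gi (X * Y * g z) in hSv hvq hxq hvP *.
have hq : q \in A by exact: hgi.
have ga : g (gi (g y / f b (Y * Z))) = g y / f b (Y * Z) by exact: giK.
rewrite ga.
set a := gi (g y / f b (Y * Z)) in hSy *.
set B := Y * Z in hSy hyb hYZ *.
set Q := X * Y * Z in hSv hvq hxq hvP *.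
have fb := nz _ (hf _ _ hb hYZ).
have fq := nz _ (hf _ _ hq hVZ).
rewrite giK //.
have -> : X * f b B / f q Q * (g y / f b B) = X * g y / f q Q.
  by field; rewrite ?fb ?fq ?fp.
have E2 : X * f b B / f q Q * Y * f z Z / f b B = X * Y * f z Z / f q Q.
  by field; rewrite ?fb ?fq ?fp.
rewrite E2.
have fp := nz _ (hf _ _ (hgi _ hvq) hvP).
set p := gi (X * g y / f q Q) in hSv fp *.
set P := X * Y * f z Z / f q Q in hSv fp *.
congr (_, _, _, _).
  by rewrite -hSv; congr gi; field; rewrite ?fb ?fq ?fp.
by rewrite -hSy -hSv; field; rewrite ?fb ?fq ?fp.
Qed.
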